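(* Let $m \geq 0$, $n \geq 1$ be integers. For a sorted configuration $c = (c^t; c^b)$ on $K_{m,n}^0$, let $k = (k_1,\ldots,k_n)$ with $k_j := |\{ i \in \{1,\ldots,m\} : c^t_i < j\}|$, and define $\Psi(c) := \big(F(k), F(c^b)\big)$. Then $\Psi$ is a bijection from the set of sorted stochastically recurrent configurations on $K_{m,n}^0$ to the set of compatible pairs $(F, F')$ with $F \in \mathrm{Ferrers}_{m,n}$ and $F' \in \mathrm{Ferrers}_{\leq m, n}$. Moreover, for such $c$, $\mathrm{level}(c) = \mathrm{Area}(F(c^b)) - \mathrm{Area}(F(k))$, and this is also the number of $\mathsf{Add}$ operations in any sequence of legal $\mathsf{Shift}$ and $\mathsf{Add}$ operations transforming $F(k)$ into $F(c^b)$.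
   Context: $K_{m,n}^0$ is the complete bipartite graph with ''top'' vertices $v^t_0, v^t_1, \ldots, v^t_m$ and ''bottom'' vertices $v^b_1, \ldots, v^b_n$, with an edge between every top vertex and every bottom vertex; $v^t_0$ is the sink. A configuration is a vector $c = (c^t_1, \ldots, c^t_m; c^b_1, \ldots, c^b_n)$ of non-negative integers ($c^*_i$ = number of grains at $v^*_i$); it is sorted if $c^t$ and $c^b$ are both weakly increasing. $c$ is stable if $c^t_i < n$ for all $i$ and $c^b_j < m+1$ for all $j$. Stochastic sandpile model (SSM) with a fixed parameter $p \in (0,1)$: an unstable vertex topples as follows: for each of its neighbours (for a bottom vertex this includes the sink), independently (and independently of all previous topplings), with probability $p$ it sends one grain to that neighbour, and otherwise keeps it; grains sent to the sink disappear. Repeated toppling from any configuration reaches a random stable configuration whose law does not depend on toppling order. In the Markov chain on stable configurations which at each step adds a grain to a uniformly random non-sink vertex and stabilises by the SSM, a stable configuration is stochastically recurrent if it is a recurrent state (appears infinitely often). The level is $\mathrm{level}(c) := \sum_i c^t_i + \sum_j c^b_j - mn$. A Ferrers diagram with $n$ rows is a left-aligned collection of cells in $n$ rows (ordered bottom to top, rows may be empty) whose row lengths are weakly increasing from bottom to top; for a weakly increasing $s = (s_1,\ldots,s_n)$ of non-negative integers, $F(s)$ is the Ferrers diagram with $s_i$ cells in row $i$. Its number of columns is $s_n$. $\mathrm{Ferrers}_{m,n}$ (resp. $\mathrm{Ferrers}_{\leq m,n}$) is the set of Ferrers diagrams with $n$ rows and exactly $m$ (resp. at most $m$) columns. $\mathrm{Area}(F)$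 is the number of cells. Operations on $F(s)$: $\mathsf{Shift}$ moves one cell from a row $p$ to a row $p' < p$ (i.e. $s_p \mapsto s_p - 1$, $s_{p'} \mapsto s_{p'} + 1$); $\mathsf{Add}$ adds a cell at the right of a row $p$ ($s_p \mapsto s_p + 1$). An operation is legal if the result is again a Ferrers diagram (the number of columns may change). An ordered pair $(F, F')$ is compatible if $F'$ can be obtained from $F$ by a finite sequence of legal $\mathsf{Shift}$ and $\mathsf{Add}$ operations. *)

(* Defs.v *)
From mathcomp Require Import all_boot all_order all_algebra.
Set Implicit Arguments. Unset Strict Implicit. Unset Printing Implicit Defensive.
Import GRing.Theory Num.Theory.

Inductive star (T : Type) (R : T -> T -> Prop) : T -> T -> Prop :=
| star_refl x : star R x x
| star_step x y z : R x y -> star R y z -> star R x z.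

(* Top non-sink vertex v^t_{i+1} is indexed by i : 'I_m,
   bottom vertex v^b_{j+1} by j : 'I_n; the sink v^t_0 is implicit. *)
Definition config (m n : nat) := ({ffun 'I_m -> nat} * {ffun 'I_n -> nat})%type.

Definition add_on (k : nat) (f : {ffun 'I_k -> nat}) (A : {set 'I_k}) :
  {ffun 'I_k -> nat} := [ffun x => f x + (x \in A)].

Definition sub_at (k : nat) (f : {ffun 'I_k -> nat}) (x0 : 'I_k) (d : nat) :
  {ffun 'I_k -> nat} := [ffun x => if x == x0 then f x - d else f x].

Definition sorted_config m n (c : config m n) : Prop :=
  (forall i j : 'I_m, (i <= j)%N -> (c.1 i <= c.1 j)%N) /\
  (forall i j : 'I_n, (i <= j)%N -> (c.2 i <= c.2 j)%N).

Definition stable m n (c : config m n) : Prop :=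
  (forall i : 'I_m, c.1 i < n)%N /\ (forall j : 'I_n, c.2 j < m.+1)%N.

(* One stochastic toppling with a possible outcome: an unstable vertex sends
   one grain to each neighbour of an arbitrary subset S of its neighbours
   (each such outcome has probability p^|S| (1-p)^(deg-|S|) > 0). For a
   bottom vertex, [b] says whether a grain is sent to the sink. *)
Inductive topple m n : config m n -> config m n -> Prop :=
| topple_top (c : config m n) (i : 'I_m) (S : {set 'I_n}) :
    (n <= c.1 i)%N ->
    topple c (sub_at c.1 i #|S|, add_on c.2 S)
| topple_bot (c : config m n) (j : 'I_n) (S : {set 'I_m}) (b : bool) :
    (m.+1 <= c.2 j)%N ->
    topple c (add_on c.1 S, sub_at c.2 j (#|S| + b)).

(* c' is a stable configuration obtained from c with positive probability *)
Definition stabilizes_to m n (c c' : config m n) : Prop :=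
  star (@topple m n) c c' /\ stable c'.

Definition add_top m n (c : config m n) (i : 'I_m) : config m n :=
  (add_on c.1 [set i], c.2).
Definition add_bot m n (c : config m n) (j : 'I_n) : config m n :=
  (c.1, add_on c.2 [set j]).

(* positive-probability transitions of the Markov chain on stable configs *)
Definition chain_step m n (c c' : config m n) : Prop :=
  stable c /\
  ((exists i : 'I_m, stabilizes_to (add_top c i) c') \/
   (exists j : 'I_n, stabilizes_to (add_bot c j) c')).

(* recurrent state of the (finite) Markov chain: every state reachable from c
   leads back to c *)
Definition stoch_recurrent m n (c : config m n) : Prop :=
  stable c /\ forall c', star (@chain_step m n) c c' -> star (@chain_step m n) c' c.

Definition level m n (c : config m n) : int :=
  ((\sum_(i < m) c.1 i + \sum_(j < n) c.2 j)%N)%:Z - (m * n)%N%:Z.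

(* F(s) is identified with its row-length vector s; row j+1 is s j. *)
Definition ferrers n (s : {ffun 'I_n -> nat}) : Prop :=
  forall i j : 'I_n, (i <= j)%N -> (s i <= s j)%N.

(* number of columns = length of top row s_n (= max row length) *)
Definition ncols n (s : {ffun 'I_n -> nat}) : nat := \max_(i < n) s i.

Definition area n (s : {ffun 'I_n -> nat}) : nat := \sum_(i < n) s i.

Inductive fop (n : nat) :=
| Shift of 'I_n & 'I_n   (* Shift p p' : move a cell from row p to row p' < p *)
| Add of 'I_n.           (* Add p : add a cell at the right of row p *)

Definition is_add n (o : fop n) : bool := if o is Add _ then true else false.

Inductive legal_op n : {ffun 'I_n -> nat} -> fop n -> {ffun 'I_n -> nat} -> Prop :=
| legal_shift (s : {ffun 'I_n -> nat}) (p p' : 'I_n) :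
    (p' < p)%N -> (0 < s p)%N ->
    ferrers (add_on (sub_at s p 1) [set p']) ->
    legal_op s (Shift p p') (add_on (sub_at s p 1) [set p'])
| legal_add (s : {ffun 'I_n -> nat}) (p : 'I_n) :
    ferrers (add_on s [set p]) ->
    legal_op s (Add p) (add_on s [set p]).

Inductive op_seq n : {ffun 'I_n -> nat} -> seq (fop n) -> {ffun 'I_n -> nat} -> Prop :=
| op_seq_nil s : op_seq s [::] s
| op_seq_cons s o s1 os s2 : legal_op s o s1 -> op_seq s1 os s2 -> op_seq s (o :: os) s2.

Definition compatible n (F F' : {ffun 'I_n -> nat}) : Prop :=
  exists os, op_seq F os F'.

Definition kvec m n (c : config m n) : {ffun 'I_n -> nat} :=
  [ffun j : 'I_n => #|[set i : 'I_m | (c.1 i < j.+1)%N]|].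

Definition Psi m n (c : config m n) : {ffun 'I_n -> nat} * {ffun 'I_n -> nat} :=
  (kvec c, c.2).

Definition compatible_target m n (P : {ffun 'I_n -> nat} * {ffun 'I_n -> nat}) : Prop :=
  [/\ ferrers P.1, ncols P.1 = m, ferrers P.2, (ncols P.2 <= m)%N & compatible P.1 P.2].

(* Main.v *)
Require Import Defs.
From mathcomp Require Import all_boot all_order all_algebra.
From mathcomp Require Import perm zify.
Import GRing.Theory Num.Theory.
Set Implicit Arguments. Unset Strict Implicit. Unset Printing Implicit Defensive.

Lemma card_sum (T : finType) (P : pred T) : #|[set x | P x]| = \sum_x (P x : nat).
Proof.
rewrite -sum1_card big_mkcond /=; apply: eq_bigr => x _; rewrite inE; by case: (P x).
Qed.

Lemma sum_ind_le (n t x : nat) :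
  \sum_(j < n) ((j < t) && (x <= j) : nat) = minn t n - x.
Proof.
elim: n => [|n IH]; first by rewrite big_ord0; lia.
rewrite big_ord_recr /= IH.
case: (ltnP n t) => h1; case: (leqP x n) => h2 /=; lia.
Qed.

Lemma sum_eq1 n (q : 'I_n) (P : pred 'I_n) :
  \sum_(j < n) ((j == q) && P j : nat) = P q.
Proof.
rewrite (bigD1 q) //= eqxx /= big1 ?addn0 // => j /negbTE ->; done.
Qed.

Lemma sum_add_on k (f : {ffun 'I_k -> nat}) (S : {set 'I_k}) (P : pred 'I_k) :
  \sum_(i | P i) add_on f S i = \sum_(i | P i) f i + #|[set i | P i & i \in S]|.
Proof.
rewrite card_sum big_mkcond [X in _ = X + _]big_mkcond [X in _ = _ + X]big_mkcond.
rewrite -big_split /=; apply: eq_bigr => i _; rewrite /add_on ffunE.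
by case: (P i); case: (i \in S).
Qed.

Lemma sum_sub_at k (f : {ffun 'I_k -> nat}) x d (P : pred 'I_k) : d <= f x ->
  \sum_(i | P i) sub_at f x d i + d * P x = \sum_(i | P i) f i.
Proof.
move=> hd; case Px: (P x).
  rewrite (bigD1 x) //= [X in _ = X](bigD1 x) //= /sub_at ffunE eqxx.
  rewrite muln1 addnAC subnK //; congr (_ + _).
  by apply: eq_bigr => i /andP [_ /negbTE h]; rewrite ffunE h.
rewrite /= muln0 addn0; apply: eq_bigr => i Pi; rewrite /sub_at ffunE.
by case: eqP => // e; subst; rewrite Px in Pi.
Qed.

Lemma sum_add_onS k (f : {ffun 'I_k -> nat}) (S A : {set 'I_k}) :
  \sum_(i in A) add_on f S i = \sum_(i in A) f i + #|[set i | i \in A & i \in S]|.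
Proof. exact: (sum_add_on f S (mem A)). Qed.

Lemma sum_sub_atS k (f : {ffun 'I_k -> nat}) x d (A : {set 'I_k}) : d <= f x ->
  \sum_(i in A) sub_at f x d i + d * (x \in A) = \sum_(i in A) f i.
Proof. exact: (sum_sub_at (mem A)). Qed.

Lemma star_trans T (R : T -> T -> Prop) x y z : star R x y -> star R y z -> star R x z.
Proof. elim=> // a b c h _ IH /IH; exact: star_step. Qed.

Definition Inv m n (c : config m n) :=
  forall (A : {set 'I_m}) (B : {set 'I_n}),
    #|A| * #|B| <= \sum_(i in A) c.1 i + \sum_(j in B) c.2 j.

Lemma card_out k (S B : {set 'I_k}) :
  #|S| <= #|[set j | j \in B & j \in S]| + (k - #|B|).
Proof.
have -> : [set j | j \in B & j \in S] = S :&: B.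
  by apply/setP => j; rewrite !inE andbC.
have h1 := cardsID B S.
have h2 : #|S :\: B| <= #|~: B|.
  by apply: subset_leq_card; rewrite setDE subsetIr.
have h3 := cardsC B; rewrite card_ord in h3; lia.
Qed.

Lemma topple_Inv m n (c d : config m n) : topple c d -> Inv c -> Inv d.
Proof.
case=> {d} [c' i S hi | c' j S b hj] hI A B /=.
- have hS : #|S| <= c'.1 i by apply: leq_trans hi; rewrite -[X in _ <= X]card_ord max_card.
  have e1 : \sum_(x in A) sub_at c'.1 i #|S| x + #|S| * (i \in A) = \sum_(x in A) c'.1 x by exact: sum_sub_atS.
  rewrite sum_add_onS.
  have hc := card_out S B.
  case iA: (i \in A); rewrite /= iA in e1.
  + have h := hI (A :\ i) B.
    have e2 : \sum_(x in A) c'.1 x = c'.1 i + \sum_(x in A :\ i) c'.1 x by rewrite (big_setD1 i iA).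
    rewrite (cardsD1 i A) iA /=.
    rewrite mulnDl mul1n.
    rewrite muln1 in e1.
    have hB : #|B| <= n by rewrite -[X in _ <= X]card_ord max_card.
    rewrite e2 in e1.
    have key : forall (B P X Y Z s bs n ci : nat), B <= n -> s <= bs + (n - B) ->
      P <= X + Y -> Z + s = ci + X -> n <= ci -> B + P <= Z + (Y + bs).
      by move=> *; lia.
    exact: (key _ _ _ _ _ _ _ _ _ hB hc h e1 hi).
  + rewrite /= muln0 addn0 in e1; rewrite e1.
    apply: leq_trans (hI A B) _; rewrite leq_add2l; exact: leq_addr.
- have hS : #|S| + b <= c'.2 j.
    have hSm : #|S| <= m by rewrite -[X in _ <= X]card_ord max_card.
    apply: (leq_trans _ hj); case: b => /=.
      by rewrite addn1 ltnS.
    by rewrite addn0; apply: leq_trans hSm (leqnSn m).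
  have e1 : \sum_(x in B) sub_at c'.2 j (#|S| + b) x + (#|S| + b) * (j \in B) = \sum_(x in B) c'.2 x by exact: sum_sub_atS.
  rewrite sum_add_onS.
  have hc := card_out S A.
  case jB: (j \in B); rewrite /= jB in e1.
  + have h := hI A (B :\ j).
    have e2 : \sum_(x in B) c'.2 x = c'.2 j + \sum_(x in B :\ j) c'.2 x by rewrite (big_setD1 j jB).
    rewrite (cardsD1 j B) jB /=.
    rewrite mulnDr muln1.
    rewrite muln1 in e1.
    have hA : #|A| <= m by rewrite -[X in _ <= X]card_ord max_card.
    have hb : b <= 1 by apply: leq_b1.
    rewrite e2 in e1.
    have key : forall (A P XA as' Z s b Y cj m : nat), A <= m -> s <= as' + (m - A) ->
      P <= XA + Y -> Z + (s + b) = cj + Y -> m < cj -> b <= 1 -> A + P <= XA + as' + Z.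
      by move=> *; lia.
    exact: (key _ _ _ _ _ _ _ _ _ _ hA hc h e1 hj hb).
  + rewrite /= muln0 addn0 in e1; rewrite e1.
    apply: leq_trans (hI A B) _; rewrite -addnA leq_add2l addnC; exact: leq_addr.
Qed.

Lemma star_topple_Inv m n (c d : config m n) : star (@topple m n) c d -> Inv c -> Inv d.
Proof. elim=> // x y z h _ IH hx; apply: IH; exact: topple_Inv h hx. Qed.

Lemma Inv_add_top m n (c : config m n) i : Inv c -> Inv (add_top c i).
Proof.
move=> h A B /=; rewrite sum_add_onS.
apply: leq_trans (h A B) _; rewrite -addnA leq_add2l; exact: leq_addl.
Qed.

Lemma Inv_add_bot m n (c : config m n) j : Inv c -> Inv (add_bot c j).
Proof.
move=> h A B /=; rewrite sum_add_onS.
apply: leq_trans (h A B) _; rewrite leq_add2l; exact: leq_addr.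
Qed.

Lemma chain_Inv m n (c d : config m n) : chain_step c d -> Inv c -> Inv d.
Proof.
case=> _ [[i [h _]] | [j [h _]]] hc; apply: star_topple_Inv h _.
  exact: Inv_add_top. exact: Inv_add_bot.
Qed.

Lemma star_chain_Inv m n (c d : config m n) : star (@chain_step m n) c d -> Inv c -> Inv d.
Proof. elim=> // x y z h _ IH hx; apply: IH; exact: chain_Inv h hx. Qed.

Definition cmax m n : config m n := ([ffun _ => n.-1], [ffun _ => m]).

Lemma Inv_cmax m n : 0 < n -> Inv (cmax m n).
Proof.
move=> hn A B /=.
rewrite (eq_bigr (fun _ => n.-1)) => [|i _]; last by rewrite ffunE.
rewrite [X in _ <= _ + X](eq_bigr (fun _ => m)) => [|i _]; last by rewrite ffunE.
rewrite !sum_nat_const.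
have hA : #|A| <= m by rewrite -[X in _ <= X]card_ord max_card.
have hB : #|B| <= n by rewrite -[X in _ <= X]card_ord max_card.
move: #|A| #|B| hA hB => a b hA hB; nia.
Qed.

Lemma stable_cmax m n : 0 < n -> stable (cmax m n).
Proof. by move=> hn; split=> i; rewrite ffunE // prednK. Qed.

Lemma sum_diff_add k (f g : {ffun 'I_k -> nat}) i0 : f i0 < g i0 ->
  \sum_i (g i - add_on f [set i0] i) < \sum_i (g i - f i).
Proof.
move=> h; rewrite (bigD1 i0) // [X in _ < X](bigD1 i0) //= ffunE inE eqxx /=.
rewrite (eq_bigr (fun i => g i - f i)) => [|i /negbTE hi]; last by rewrite ffunE inE hi addn0.
rewrite ltn_add2r.
move: (g i0) (f i0) h => a b; lia.
Qed.

Lemma term_le_sum k (F : 'I_k -> nat) i : F i <= \sum_j F j.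
Proof. by rewrite (bigD1 i) //= leq_addr. Qed.

Lemma chain_refl_top m n (x : config m n) i : stable x -> stable (add_top x i) ->
  chain_step x (add_top x i).
Proof. by move=> sx sx'; split=> //; left; exists i; split=> //; apply: star_refl. Qed.

Lemma chain_refl_bot m n (x : config m n) j : stable x -> stable (add_bot x j) ->
  chain_step x (add_bot x j).
Proof. by move=> sx sx'; split=> //; right; exists j; split=> //; apply: star_refl. Qed.

Lemma up_chain m n (x y : config m n) : stable y ->
  (forall i, x.1 i <= y.1 i) -> (forall j, x.2 j <= y.2 j) -> star (@chain_step m n) x y.
Proof.
move=> sy.
suff H : forall k (x : config m n), \sum_i (y.1 i - x.1 i) + \sum_j (y.2 j - x.2 j) <= k ->
  (forall i, x.1 i <= y.1 i) -> (forall j, x.2 j <= y.2 j) -> star (@chain_step m n) x y.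
  by move=> h1 h2; apply: H (leqnn _) h1 h2.
case: (sy) => sy1 sy2.
elim=> [|k IH] {}x hk h1 h2.
- have e1 : x.1 = y.1.
    apply/ffunP=> i; apply/eqP; rewrite eqn_leq h1 /= -subn_eq0 -leqn0.
    apply: leq_trans hk; apply: leq_trans (leq_addr _ _); exact: (term_le_sum (fun i => y.1 i - x.1 i)).
  have e2 : x.2 = y.2.
    apply/ffunP=> i; apply/eqP; rewrite eqn_leq h2 /= -subn_eq0 -leqn0.
    apply: leq_trans hk; apply: leq_trans (leq_addl _ _); exact: (term_le_sum (fun i => y.2 i - x.2 i)).
  by case: x e1 e2 {hk h1 h2} => a b /= -> ->; case: (y) => ? ? /=; apply: star_refl.
- have sx : stable x.
    split=> [i|j]; [exact: leq_ltn_trans (h1 i) (sy1 i) | exact: leq_ltn_trans (h2 j) (sy2 j)].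
  case: (boolP [exists i, x.1 i < y.1 i]) => [/existsP [i hi] | /existsPn hno1].
    have sx' : stable (add_top x i).
      split=> [i'|j] /=; last exact: sx.2.
      rewrite ffunE inE; case: eqP => [->|_]; last by rewrite addn0; exact: sx.1.
      by rewrite addn1; exact: leq_ltn_trans hi (sy1 i).
    apply: star_step (chain_refl_top sx sx') _; apply: IH => /=.
    - rewrite -ltnS; apply: leq_trans hk; rewrite ltn_add2r; exact: sum_diff_add.
    - move=> i'; rewrite ffunE inE; case: eqP => [->|_]; first by rewrite addn1.
      by rewrite addn0.
    - exact: h2.
  case: (boolP [exists j, x.2 j < y.2 j]) => [/existsP [j hj] | /existsPn hno2].
    have sx' : stable (add_bot x j).
      split=> [i'|j'] /=; first exact: sx.1.
      rewrite ffunE inE; case: eqP => [->|_]; last by rewrite addn0; exact: sx.2.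
      by rewrite addn1; exact: leq_ltn_trans hj (sy2 j).
    apply: star_step (chain_refl_bot sx sx') _; apply: IH => /=.
    - rewrite -ltnS; apply: leq_trans hk; rewrite ltn_add2l; exact: sum_diff_add.
    - exact: h1.
    - move=> j'; rewrite ffunE inE; case: eqP => [->|_]; first by rewrite addn1.
      by rewrite addn0.
  have e1 : x.1 = y.1.
    apply/ffunP=> i; apply/eqP; rewrite eqn_leq h1 /= leqNgt; exact: hno1.
  have e2 : x.2 = y.2.
    apply/ffunP=> i; apply/eqP; rewrite eqn_leq h2 /= leqNgt; exact: hno2.
  by case: x e1 e2 {hk h1 h2 sx hno1 hno2} => a b /= -> ->; case: (y) => ? ? /=; apply: star_refl.
Qed.

Lemma star_chain_stable m n (c d : config m n) :
  star (@chain_step m n) c d -> stable c -> stable d.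
Proof. by elim=> // x y z [_ [[i [_ s]] | [j [_ s]]]] _ IH _; apply: IH. Qed.

Lemma below_cmax m n (c : config m n) : 0 < n -> stable c -> star (@chain_step m n) c (cmax m n).
Proof.
move=> hn [s1 s2]; apply: up_chain; first exact: stable_cmax.
- by move=> i; rewrite ffunE -ltnS prednK.
- by move=> j; rewrite ffunE -ltnS.
Qed.

Lemma rec_Inv m n (c : config m n) : 0 < n -> stoch_recurrent c -> Inv c.
Proof.
move=> hn [sc hrec]; apply: star_chain_Inv (hrec _ (below_cmax hn sc)) _.
exact: Inv_cmax.
Qed.

Definition pre n (s : {ffun 'I_n -> nat}) t := \sum_(j < n | j < t) s j.

Lemma card_lt n t : t <= n -> #|[set j : 'I_n | j < t]| = t.
Proof.
move=> h; rewrite card_sum (eq_bigr (fun j : 'I_n => ((j < t) && (0 <= j) : nat))) => [|j _].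
  by rewrite sum_ind_le subn0; apply/minn_idPl.
by rewrite andbT.
Qed.

Lemma inner_sum n t x : t <= n ->
  \sum_(j < n | j < t) (x < j.+1 : nat) = t - x.
Proof.
move=> h; rewrite big_mkcond /= (eq_bigr (fun j : 'I_n => ((j < t) && (x <= j) : nat))) => [|j _].
  by rewrite sum_ind_le; congr (_ - _); apply/minn_idPl.
by case: (j < t).
Qed.

Lemma pre_kvec m n (c : config m n) t : t <= n ->
  pre (kvec c) t + \sum_(i in [set i | c.1 i < t]) c.1 i = #|[set i | c.1 i < t]| * t.
Proof.
move=> ht; rewrite /pre.
rewrite (eq_bigr (fun j : 'I_n => \sum_(i < m) (c.1 i < j.+1 : nat))) => [|j _]; last first.
  by rewrite ffunE card_sum.
rewrite exchange_big /=.
rewrite (eq_bigr (fun i : 'I_m => t - c.1 i)) => [|i _]; last exact: inner_sum.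
rewrite -sum_nat_const.
rewrite (big_mkcond (fun i => i \in _)) /=.
rewrite [\sum_(i < m) (t - c.1 i)](eq_bigr (fun i => if i \in [set i | c.1 i < t] then t - c.1 i else 0)) => [|i _]; last first.
  rewrite inE; case: ltnP => // h; apply/eqP; rewrite subn_eq0 //.
rewrite -big_mkcond -big_mkcond -big_split /=; apply: eq_bigr => i; rewrite inE => h.
by rewrite subnK // ltnW.
Qed.

Lemma Inv_prefix m n (c : config m n) t : t <= n -> Inv c -> pre (kvec c) t <= pre c.2 t.
Proof.
move=> ht hI.
have h := hI [set i | c.1 i < t] [set j : 'I_n | j < t].
rewrite card_lt // in h.
have eB : \sum_(j in [set j : 'I_n | j < t]) c.2 j = pre c.2 t.
  by apply: eq_bigl => j; rewrite inE.
rewrite eB in h.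
have eK := pre_kvec c ht.
move: h eK; move: (pre _ t) (pre _ t) (\sum_(i in _) _) (#|_| * t) => P Q S X; lia.
Qed.

Lemma pre_add_on n (s : {ffun 'I_n -> nat}) p t : pre (add_on s [set p]) t = pre s t + (p < t).
Proof.
rewrite /pre sum_add_on card_sum; congr (_ + _).
rewrite (eq_bigr (fun j : 'I_n => ((j == p) && (fun j : 'I_n => j < t) j : nat))) => [|j _].
  by rewrite sum_eq1.
by rewrite inE andbC.
Qed.

Lemma pre_sub_at n (s : {ffun 'I_n -> nat}) p t : 0 < s p ->
  pre (sub_at s p 1) t + (p < t) = pre s t.
Proof. move=> h; rewrite /pre -(sum_sub_at (fun j : 'I_n => j < t) h) mul1n //. Qed.

Lemma pre0 n (s : {ffun 'I_n -> nat}) : pre s 0 = 0.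
Proof. by rewrite /pre big_pred0. Qed.

Lemma preS n (s : {ffun 'I_n -> nat}) t (h : t < n) : pre s t.+1 = pre s t + s (Ordinal h).
Proof.
rewrite /pre (bigD1 (Ordinal h)) /=; last by [].
rewrite addnC; congr (_ + _); apply: eq_bigl => j.
rewrite -val_eqE /= ltnS leq_eqVlt; case: (ltngtP j t) => //=.
Qed.

Lemma pre_area n (s : {ffun 'I_n -> nat}) : pre s n = area s.
Proof. by rewrite /pre /area; apply: eq_bigl => j; rewrite ltn_ord. Qed.

Lemma sum_lt k (f g : 'I_k -> nat) t0 : (forall t, f t <= g t) -> f t0 < g t0 ->
  \sum_t f t < \sum_t g t.
Proof.
move=> h1 h2; rewrite (bigD1 t0) // [X in _ < X](bigD1 t0) //=.
rewrite -addSn; apply: leq_add => //; apply: leq_sum => t _; exact: h1.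
Qed.

Lemma preSo n (s : {ffun 'I_n -> nat}) (j : 'I_n) : pre s j.+1 = pre s j + s j.
Proof. by case: j => j hj; rewrite (preS s hj). Qed.

Definition mu n (s s' : {ffun 'I_n -> nat}) := \sum_(t < n.+1) (pre s' t - pre s t).

Lemma mu_lt n (s s1 s' : {ffun 'I_n -> nat}) t0 : t0 <= n ->
  (forall t, pre s t <= pre s1 t) -> pre s t0 < pre s1 t0 -> pre s1 t0 <= pre s' t0 ->
  mu s1 s' < mu s s'.
Proof.
move=> ht0 h1 h2 h3; rewrite /mu.
apply: (@sum_lt _ _ _ (Ordinal (ht0 : t0 < n.+1))) => [t|] /=.
  by apply: leq_sub2l.
move: h2 h3; move: (pre s t0) (pre s1 t0) (pre s' t0) => x y z; lia.
Qed.

Lemma ferrers_step n (s s' : {ffun 'I_n -> nat}) : 0 < n -> ferrers s -> ferrers s' ->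
  (forall t, t <= n -> pre s t <= pre s' t) -> s != s' ->
  exists o s1, [/\ legal_op s o s1, (forall t, t <= n -> pre s1 t <= pre s' t)
                 & mu s1 s' < mu s s'].
Proof.
move=> hn hs hs' hp hneq.
case: (ltnP (pre s n) (pre s' n)) => hN.
-
  have htop : n.-1 < n by rewrite prednK.
  set ptop := Ordinal htop.
  have fs1 : ferrers (add_on s [set ptop]).
    move=> i j hij; rewrite !ffunE !inE.
    case: (eqVneq j ptop) => [ej|nj].
      apply: leq_add; [exact: hs | exact: leq_b1].
    have : (j < n.-1)%N.
      move: (ltn_ord j) nj; rewrite -val_eqE /= => h1 h2.
      by rewrite ltn_neqAle h2 /= -ltnS prednK.
    move=> hj; have ni : i != ptop.
      by rewrite -val_eqE /= neq_ltn (leq_ltn_trans hij hj).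
    by rewrite (negbTE ni) !addn0; apply: hs.
  exists (Add ptop), (add_on s [set ptop]); split.
  + exact: legal_add.
  + move=> t ht; rewrite pre_add_on.
    case: (ltnP ptop t) => /= h.
      have -> : t = n by apply/eqP; rewrite eqn_leq ht /=; move: h; rewrite /= -ltnS prednK.
      by rewrite addn1.
    by rewrite addn0; apply: hp.
  + apply: (@mu_lt _ _ _ _ n) => //.
    * by move=> t; rewrite pre_add_on leq_addr.
    * by rewrite pre_add_on /= htop addn1 ltnSn.
    * by rewrite pre_add_on /= htop addn1.
-
  have hNe : pre s n = pre s' n by apply/eqP; rewrite eqn_leq hN hp.
  have [t0 [ht0 hlt]] : exists t, t <= n /\ pre s t < pre s' t.
    case: (boolP [exists t : 'I_n.+1, pre s t < pre s' t]) => [/existsP [t ht]|/existsPn hno].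
      by exists t; split => //; rewrite -ltnS.
    exfalso; move/negP: hneq; apply; apply/eqP/ffunP => j.
    have e : forall t, t <= n -> pre s t = pre s' t.
      move=> t ht; apply/eqP; rewrite eqn_leq hp //=.
      by have := hno (Ordinal (ht : t < n.+1)); rewrite -leqNgt.
    have e1 := e j (ltnW (ltn_ord j)); have e2 := e j.+1 (ltn_ord j).
    rewrite !preSo e1 in e2; move: e2; move: (pre s' j) (s j) (s' j) => x y z; lia.
  pose P := fun t => (t <= n) && (pre s t < pre s' t).
  have exP : exists t, P t by exists t0; rewrite /P ht0 hlt.
  have ubP : forall t, P t -> t <= n by move=> t /andP [].
  case: (ex_maxnP exP ubP) => b /andP [hbn' hDb] maxb.
  have hbn : b < n.
    by rewrite ltn_neqAle hbn' andbT; apply/eqP => eb; move: hDb; rewrite eb hNe ltnn.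
  have hb1 : pre s b.+1 = pre s' b.+1.
    apply/eqP; rewrite eqn_leq hp //=; rewrite leqNgt; apply/negP => h.
    by have := maxb b.+1; rewrite /P hbn h => /(_ isT); rewrite ltnn.
  have hb0 : 0 < b.
    by rewrite lt0n; apply/eqP => eb; move: hDb; rewrite eb !pre0.
  pose Q := fun t => (t < b) && (pre s t == pre s' t).
  have exQ : exists t, Q t by exists 0; rewrite /Q hb0 !pre0.
  have ubQ : forall t, Q t -> t <= b by move=> t /andP [h _]; exact: ltnW.
  case: (ex_maxnP exQ ubQ) => a /andP [hab /eqP hDa] maxa.
  have hDpos : forall t, a < t -> t <= b -> pre s t < pre s' t.
    move=> t h1 h2; case: (eqVneq t b) => [-> //|ntb].
    have htb : t < b by rewrite ltn_neqAle ntb.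
    rewrite ltn_neqAle hp ?andbT; last exact: leq_trans (ltnW htb) hbn'.
    apply/negP => /eqP h; have := maxa t; rewrite /Q htb h eqxx => /(_ isT).
    by rewrite leqNgt h1.
  have han : a < n by apply: ltn_trans hab hbn.
  set oa := Ordinal han; set ob := Ordinal hbn.
  have hsa : s oa < s' oa.
    have h := hDpos a.+1 (ltnSn a) hab.
    have e1 := preSo s oa; have e2 := preSo s' oa; rewrite /= in e1 e2.
    rewrite e1 e2 hDa in h; move: h; move: (pre s' a) (s oa) (s' oa) => x y z; lia.
  have hsb : s' ob < s ob.
    have e1 := preSo s ob; have e2 := preSo s' ob; rewrite /= in e1 e2.
    rewrite e1 e2 in hb1; move: hb1 hDb; move: (pre s b) (pre s' b) (s ob) (s' ob) => x y z w; lia.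
  have hsab : s oa + 2 <= s ob.
    have h := hs' oa ob (ltnW hab).
    move: h hsa hsb; move: (s oa) (s ob) (s' oa) (s' ob) => x y z w; lia.
  case: (@arg_maxnP _ oa (fun x => s x <= s oa) (fun x => nat_of_ord x) (leqnn _)) => p' hp'1 hp'2.
  case: (@arg_minnP _ ob (fun x => s ob <= s x) (fun x => nat_of_ord x) (leqnn _)) => p hp1 hp2.
  have hap' : a <= p' by apply: (hp'2 oa).
  have hpb : p <= b by apply: (hp2 ob).
  have F1 : forall j : 'I_n, p' < j -> s p' < s j.
    move=> j hj; apply: (leq_ltn_trans hp'1); rewrite ltnNge; apply/negP => h.
    by move: (hp'2 j h) => /=; rewrite leqNgt hj.
  have F2 : forall i : 'I_n, i < p -> s i < s p.
    move=> i hi; apply: (leq_trans _ hp1); rewrite ltnNge; apply/negP => h.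
    by have := hp2 i h; rewrite leqNgt hi.
  have F3 : s p' + 2 <= s p.
    move: hp'1 hp1 hsab; move: (s p') (s oa) (s ob) (s p) => x y z w; lia.
  have hpp : p' < p.
    rewrite ltnNge; apply/negP => h.
    have := hs p p' h; move: F3; move: (s p') (s p) => x y; lia.
  have hsp : 0 < s p by move: F3; move: (s p') (s p) => x y; lia.
  set s1 := add_on (sub_at s p 1) [set p'].
  have fs1 : ferrers s1.
    move=> i j hij; rewrite /s1 !ffunE !inE.
    have npp : p != p' by rewrite -val_eqE /= gtn_eqF.
    case: (eqVneq j p) => [ej|njp].
      subst j; rewrite ?eqxx (negbTE npp) addn0.
      case: (eqVneq i p) => [->|nip]; first by rewrite ?eqxx (negbTE npp) addn0.
      have hip : i < p by rewrite ltn_neqAle hij andbT; rewrite -val_eqE in nip.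
      case: (eqVneq i p') => [ei|nip'].
        subst i; rewrite addn1.
        move: F3; move: (s p') (s p) => x y; lia.
      rewrite addn0; have := F2 i hip.
      move: (s i) (s p) => x y; lia.
    case: (eqVneq i p) => [ei|nip].
      subst i; rewrite ?eqxx (negbTE npp) addn0.
      have := hs p j hij; move: (s p) (s j) (j == p' : nat) => x y z; lia.
    case: (eqVneq i p') => [ei|nip'].
      subst i; case: (eqVneq j p') => [->|njp']; first by [].
      have hj : p' < j by rewrite ltn_neqAle hij andbT eq_sym; rewrite -val_eqE in njp'.
      have := F1 j hj; move: (s p') (s j) => x y; rewrite /= addn0 addn1; lia.
    rewrite addn0; apply: leq_trans (hs i j hij) (leq_addr _ _).
  have epre : forall t, pre s1 t + (p < t) = pre s t + (p' < t).
    by move=> t; rewrite /s1 pre_add_on addnAC pre_sub_at.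
  exists (Shift p p'), s1; split.
  + exact: legal_shift.
  + move=> t ht; have := epre t.
    case: (ltnP p t) => h1; case: (ltnP p' t) => h2 /=.
    * rewrite !addn1 => /eq_add_S ->; exact: hp.
    * by have := ltn_trans hpp h1; rewrite ltnNge h2.
    * rewrite addn0 addn1 => e.
      have : pre s t < pre s' t by apply: hDpos; [exact: leq_ltn_trans hap' h2 | exact: leq_trans h1 hpb].
      rewrite e; move: (pre s t) (pre s' t) => x y; lia.
    * rewrite !addn0 => ->; exact: hp.
  + have hp'n : p'.+1 <= n by exact: ltn_ord.
    apply: (@mu_lt _ _ _ _ p'.+1) => //.
    * move=> t; have := epre t; have := ltn_trans hpp; case: (ltnP p t) => h1; case: (ltnP p' t) => h2 /=.
      - by rewrite !addn1 => _ /eq_add_S ->.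
      - by move=> /(_ t h1); rewrite ltnNge h2.
      - by rewrite addn0 addn1 => _ ->; rewrite leqnSn.
      - by rewrite !addn0 => _ ->.
    * have := epre p'.+1; rewrite ltnS leqNgt hpp ltnSn /= addn0 addn1 => ->; exact: ltnSn.
    * have := epre p'.+1; rewrite ltnS leqNgt hpp ltnSn /= addn0 addn1 => ->.
      apply: hDpos; first by rewrite ltnS.
      exact: leq_trans hpp hpb.
Qed.

Lemma ferrers_compat n (s s' : {ffun 'I_n -> nat}) : 0 < n -> ferrers s -> ferrers s' ->
  (forall t, t <= n -> pre s t <= pre s' t) -> compatible s s'.
Proof.
move=> hn hs hs' hp.
suff H : forall k (s : {ffun 'I_n -> nat}), mu s s' <= k -> ferrers s ->
  (forall t, t <= n -> pre s t <= pre s' t) -> compatible s s'.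
  exact: H (leqnn _) hs hp.
elim=> [|k IH] s0 hk fs hp1; (case: (eqVneq s0 s') => [->|hne]; first by exists [::]; apply: op_seq_nil);
  have [o [s1 [ho hp2 hmu]]] := ferrers_step hn fs hs' hp1 hne.
- by move: hk; rewrite leqn0 => /eqP e; rewrite e in hmu.
- have fs1 : ferrers s1 by case: ho.
  have [os hos] := IH s1 (leq_trans hmu hk) fs1 hp2.
  by exists (o :: os); apply: op_seq_cons ho hos.
Qed.

Definition TInv m n (c1 : {ffun 'I_m -> nat}) (s : {ffun 'I_n -> nat}) :=
  exists T : 'I_n -> {set 'I_m},
    (forall j, m - s j <= #|T j|) /\ (forall i, \sum_(j < n) (i \in T j : nat) <= c1 i).

Lemma TInv_init m n (c : config m n) : TInv c.1 (kvec c).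
Proof.
exists (fun j => [set i | j < c.1 i]); split.
- move=> j; rewrite ffunE.
  have -> : [set i | j < c.1 i] = ~: [set i | c.1 i < j.+1].
    by apply/setP => i; rewrite !inE ltnS -ltnNge.
  move: (cardsC [set i | c.1 i < j.+1]); rewrite card_ord.
  move: #|[set i | c.1 i < j.+1]| #|~: [set i | c.1 i < j.+1]| => x y; lia.
- move=> i; rewrite (eq_bigr (fun j : 'I_n => ((j < c.1 i) && (0 <= j) : nat))) => [|j _].
    by rewrite sum_ind_le subn0 geq_minl.
  by rewrite inE andbT.
Qed.

Lemma sum_tperm n (f : 'I_n -> nat) (p p' : 'I_n) :
  \sum_j f (tperm p p' j) = \sum_j f j.
Proof. by rewrite [RHS](reindex_inj (@perm_inj _ (tperm p p'))). Qed.

Lemma TInv_op m n (c1 : {ffun 'I_m -> nat}) (s s1 : {ffun 'I_n -> nat}) o :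
  legal_op s o s1 -> TInv c1 s -> TInv c1 s1.
Proof.
case=> {o s1} [s0 p p' hpp hsp fs1 | s0 p fs1] [T [hcol hrow]].
- have npp : p != p' by rewrite -val_eqE /= gtn_eqF.
  have F3 : s0 p' + 2 <= s0 p.
    have := fs1 p' p (ltnW hpp); rewrite !ffunE !inE eqxx (negbTE npp) eq_sym (negbTE npp).
    rewrite eqxx /= addn0 addn1; move: hsp; move: (s0 p) (s0 p') => x y; lia.
  have e1 : forall j, add_on (sub_at s0 p 1) [set p'] j =
    if j == p then s0 p - 1 else if j == p' then s0 p' + 1 else s0 j.
    move=> j; rewrite !ffunE !inE; case: (eqVneq j p) => [->|njp].
      by rewrite (negbTE npp) addn0.
    by case: (eqVneq j p') => [->|_]; rewrite ?addn0 ?addn1.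
  case: (leqP (m - (s0 p - 1)) #|T p|) => hc.
    exists T; split => // j; rewrite e1; case: (eqVneq j p) => [->|njp] //.
    case: (eqVneq j p') => [->|_]; last exact: hcol.
    apply: leq_trans (hcol p'); rewrite leq_sub2l // leq_addr //.
  have hlt : #|T p| < #|T p'|.
    have := hcol p'; move: hc hsp F3; move: (s0 p) (s0 p') #|T p| #|T p'| => x y z w; lia.
  have [i hi] : exists i, i \in T p' :\: T p.
    apply/set0Pn; apply/negP => /eqP h.
    have : T p' \subset T p by rewrite -setD_eq0 h.
    by move/subset_leq_card; rewrite leqNgt hlt.
  move: hi; rewrite inE => /andP [hip hip'].
  pose T' := fun j => if j == p then i |: T p else if j == p' then T p' :\ i else T j.
  exists T'; split.
  + move=> j; rewrite e1 /T'; case: (eqVneq j p) => [ej|njp].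
      subst j; rewrite cardsU1 hip /=; have := hcol p; move: hc hsp; move: (s0 p) #|T p| => x y; lia.
    case: (eqVneq j p') => [ej|_]; last exact: hcol.
    subst j; have := cardsD1 i (T p'); rewrite hip' /= => e.
    have := hcol p'; move: e; move: (s0 p') #|T p'| #|T p' :\ i| => x y z; lia.
  + move=> i0; apply: leq_trans (hrow i0); apply: eq_leq.
    have npp' : p' != p by rewrite eq_sym.
    case: (eqVneq i0 i) => [ei|ni0].
      subst i0; rewrite -(sum_tperm _ p p'); apply: eq_bigr => j _.
      case: (eqVneq j p) => [ej|njp].
        by subst j; rewrite tpermL /T' (negbTE npp') eqxx in_setD1 eqxx /= (negbTE hip).
      case: (eqVneq j p') => [ej|njp'].
        by subst j; rewrite tpermR /T' eqxx setU11 hip'.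
      have h1 : p != j by rewrite eq_sym.
      have h2 : p' != j by rewrite eq_sym.
      by rewrite (tpermD h1 h2) /T' (negbTE njp) (negbTE njp').
    apply: eq_bigr => j _; rewrite /T'.
    case: (eqVneq j p) => [ej|njp]; first by subst j; rewrite in_setU1 (negbTE ni0).
    case: (eqVneq j p') => [ej|njp']; first by subst j; rewrite in_setD1 ni0.
    by [].
- exists T; split => // j; apply: leq_trans (hcol j); by rewrite ffunE leq_sub2l // leq_addr.
Qed.

Lemma TInv_seq m n (c1 : {ffun 'I_m -> nat}) (s s1 : {ffun 'I_n -> nat}) os :
  op_seq s os s1 -> TInv c1 s -> TInv c1 s1.
Proof. elim=> // x o y os' z h _ IH hx; apply: IH; exact: TInv_op h hx. Qed.

Lemma star_congr T (R : T -> T -> Prop) (x x' y y' : T) :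
  x = x' -> y = y' -> star R x' y' -> star R x y.
Proof. by move=> -> ->. Qed.

Lemma topple_eq m n (c d d' : config m n) : topple c d -> d = d' -> topple c d'.
Proof. by move=> h <-. Qed.

Lemma settle m n (t : {ffun 'I_m -> nat}) (X : {set 'I_n}) :
  star (@topple m n) (t, [ffun j => m + (j \in X)]) (t, [ffun _ => m]).
Proof.
move: {2}#|X| (erefl #|X|) => k; elim: k X => [|k IH] X hk.
  have -> : X = set0 by apply/eqP; rewrite -cards_eq0 hk.
  have -> : [ffun j => m + (j \in set0)] = [ffun _ => m] :> {ffun 'I_n -> nat}.
    by apply/ffunP => j; rewrite !ffunE inE addn0.
  exact: star_refl.
have [j hj] : exists j, j \in X by apply/set0Pn; rewrite -cards_eq0 hk.
apply: (star_step (y := (t, [ffun j' => m + (j' \in X :\ j)]))); last first.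
  by apply: IH; move: (cardsD1 j X); rewrite hj hk add1n => -[].
apply: (topple_eq (@topple_bot _ _ (t, [ffun j => m + (j \in X)]) j set0 true _)).
  by rewrite /= ffunE hj addn1.
congr pair; apply/ffunP => x; rewrite !ffunE ?inE.
  by rewrite addn0.
case: (eqVneq x j) => [->|nx] /=; first by rewrite hj cards0 addn0 add0n addnK.
by [].
Qed.

Definition Z1 m n (X : {set 'I_m}) : config m n :=
  ([ffun i => if i \in X then 0 else n.-1], [ffun _ => m]).
Arguments Z1 : clear implicits.

Lemma stable_Z1 m n X : 0 < n -> stable (Z1 m n X).
Proof. by move=> hn; split=> i; rewrite ffunE //; case: (i \in X); rewrite // prednK. Qed.

Lemma phase1_step m n (X : {set 'I_m}) i : 0 < n -> i \notin X ->
  chain_step (Z1 m n X) (Z1 m n (i |: X)).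
Proof.
move=> hn hi; split; first exact: stable_Z1.
right; exists (Ordinal hn); split; last exact: stable_Z1.
set j0 := Ordinal hn.
apply: star_step.
  by apply: (@topple_bot _ _ (add_bot (Z1 m n X) j0) j0 [set i] true); rewrite /= !ffunE inE eqxx addn1.
apply: star_step.
  by apply: (@topple_top _ _ _ i setT); rewrite /= !ffunE inE eqxx (negbTE hi) addn1 prednK.
apply: (star_congr _ _ (settle (Z1 m n (i |: X)).1 [set~ j0])); last by [].
congr pair; apply/ffunP => x; rewrite !ffunE !inE.
- case: (eqVneq x i) => [->|nx] /=.
    by rewrite (negbTE hi) cardsT card_ord addn1 prednK // subnn.
  by rewrite addn0.
  have hm : 0 < m by apply: leq_ltn_trans (leq0n _) (ltn_ord i).
  case: (eqVneq x j0) => [_|nx] /=; last by rewrite addn0 addn1.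
  by rewrite cards1 addn0; move: hm; clear; lia.
Qed.

Lemma phase1 m n : 0 < n -> forall X : {set 'I_m}, star (@chain_step m n) (cmax m n) (Z1 m n X).
Proof.
move=> hn X; move: {2}#|X| (erefl #|X|) => k; elim: k X => [|k IH] X hk.
  have -> : X = set0 by apply/eqP; rewrite -cards_eq0 hk.
  apply: (star_congr _ _ (star_refl _ (cmax m n))) => //.
  by congr pair; apply/ffunP => i; rewrite !ffunE inE.
have [i hi] : exists i, i \in X by apply/set0Pn; rewrite -cards_eq0 hk.
have hX : X = i |: (X :\ i) by rewrite setD1K.
apply: star_trans (IH (X :\ i) _) _.
  by move: (cardsD1 i X); rewrite hi hk add1n => -[].
rewrite {2}hX; apply: star_step (star_refl _ _).
by apply: phase1_step => //; rewrite setD11.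
Qed.

Definition W m n (T : 'I_n -> {set 'I_m}) q : config m n :=
  ([ffun i => \sum_(j < n) ((j < q) && (i \in T j) : nat)],
   [ffun j : 'I_n => if j < q then m - #|T j| else m]).
Arguments W : clear implicits.

Lemma sum_q n (P : pred 'I_n) q (oq : 'I_n) : nat_of_ord oq = q ->
  \sum_(j < n) ((j < q.+1) && P j : nat) = \sum_(j < n) ((j < q) && P j : nat) + P oq.
Proof.
move=> eq; rewrite -(sum_eq1 oq P) -big_split /=; apply: eq_bigr => j _.
rewrite ltnS leq_eqVlt -eq -val_eqE.
by case: (ltngtP j oq) => //= _; case: (P j).
Qed.

Lemma stable_W m n (T : 'I_n -> {set 'I_m}) q : (forall i, \sum_(j < n) (i \in T j : nat) < n) -> stable (W m n T q).
Proof.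
move=> hr; split=> [i|j]; rewrite ffunE.
  apply: leq_ltn_trans (hr i); apply: leq_sum => j _; by case: (j < q); case: (i \in T j).
by case: (j < q); rewrite ltnS // leq_subr.
Qed.

Lemma phase2 m n (T : 'I_n -> {set 'I_m}) : (forall i, \sum_(j < n) (i \in T j : nat) < n) ->
  forall q, q <= n -> star (@chain_step m n) (W m n T 0) (W m n T q).
Proof.
move=> hr; elim=> [|q IH] hq; first exact: star_refl.
apply: star_trans (IH (ltnW hq)) _; apply: star_step (star_refl _ _).
split; first exact: stable_W.
right; exists (Ordinal hq); split; last exact: stable_W.
set oq := Ordinal hq.
apply: star_step (star_refl _ _).
apply: (topple_eq (@topple_bot _ _ (add_bot (W m n T q) oq) oq (T oq) true _)).
  by rewrite /= !ffunE ltnn inE eqxx addn1.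
congr pair; apply/ffunP => x; rewrite !ffunE.
  by rewrite (sum_q (fun j => x \in T j) (erefl _ : nat_of_ord oq = q)).
rewrite !inE; case: (eqVneq x oq) => [->|nx] /=.
  by rewrite ltnn ltnSn !addn1 subSS.
rewrite addn0 ltnS [x <= q]leq_eqVlt.
have -> : (nat_of_ord x == q) = false.
  by apply/negbTE; apply: contra nx => /eqP e; apply/eqP; apply: val_inj.
by [].
Qed.

Lemma rec_of_TInv m n (c : config m n) : 0 < n -> stable c -> TInv c.1 c.2 -> stoch_recurrent c.
Proof.
move=> hn sc [T [hcol hrow]]; split => // c' hc'.
have sc' := star_chain_stable hc' sc.
apply: star_trans (below_cmax hn sc') _.
apply: star_trans (phase1 hn [set: 'I_m]) _.
have hr : forall i, \sum_(j < n) (i \in T j : nat) < n.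
  by move=> i; apply: leq_ltn_trans (hrow i) (sc.1 i).
have -> : Z1 m n setT = W m n T 0.
  by congr pair; apply/ffunP => i; rewrite !ffunE ?inE // big1.
apply: star_trans (phase2 hr (leqnn n)) _.
apply: up_chain => // [i|j]; rewrite ffunE.
  apply: leq_trans (hrow i); apply: eq_leq; apply: eq_bigr => j _; by rewrite ltn_ord.
rewrite ltn_ord; move: (hcol j); move: (c.2 j) #|T j| => x y; lia.
Qed.

Lemma le_ncols n (s : {ffun 'I_n -> nat}) j : s j <= ncols s.
Proof. rewrite /ncols; exact: leq_bigmax. Qed.

Lemma ncols_top n (s : {ffun 'I_n -> nat}) (h : n.-1 < n) : ferrers s -> ncols s = s (Ordinal h).
Proof.
move=> fs; apply/eqP; rewrite eqn_leq le_ncols andbT.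
apply/bigmax_leqP => j _; apply: fs => /=; rewrite -ltnS prednK //.
by apply: leq_ltn_trans (leq0n _) h.
Qed.

Lemma kvec_le m n (c : config m n) (i : 'I_m) (j : 'I_n) :
  (forall i i' : 'I_m, i <= i' -> c.1 i <= c.1 i') -> (kvec c j <= i) = (j < c.1 i).
Proof.
move=> hs; rewrite ffunE; apply/idP/idP.
- apply: contraLR; rewrite -!ltnNge ltnS => h.
  have <- : #|[set i' : 'I_m | i' < i.+1]| = i.+1 by rewrite card_lt.
  apply: subset_leq_card; apply/subsetP => i'; rewrite !inE ltnS => hi.
  by apply: leq_ltn_trans (hs _ _ hi) _; rewrite ltnS.
- move=> h.
  have <- : #|[set i' : 'I_m | i' < i]| = i by rewrite card_lt // ltnW.
  apply: subset_leq_card; apply/subsetP => i'; rewrite !inE ltnS => hi.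
  rewrite ltnNge; apply/negP => hii.
  by have := leq_trans (hs _ _ hii) hi; rewrite leqNgt h.
Qed.

Lemma ffer_le n (F : {ffun 'I_n -> nat}) (i : nat) (j : 'I_n) : ferrers F ->
  (#|[set j' : 'I_n | F j' <= i]| <= j) = (i < F j).
Proof.
move=> fF; apply/idP/idP.
- apply: contraLR; rewrite -!ltnNge ltnS => h.
  have <- : #|[set j' : 'I_n | j' < j.+1]| = j.+1 by rewrite card_lt.
  apply: subset_leq_card; apply/subsetP => j'; rewrite !inE ltnS => hj.
  exact: leq_trans (fF _ _ hj) h.
- move=> h.
  have <- : #|[set j' : 'I_n | j' < j]| = j by rewrite card_lt // ltnW.
  apply: subset_leq_card; apply/subsetP => j'; rewrite !inE => hj.
  rewrite ltnNge; apply/negP => hjj.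
  by have := leq_trans (fF _ _ hjj) hj; rewrite leqNgt h.
Qed.

Lemma area_op n (s s1 : {ffun 'I_n -> nat}) o : legal_op s o s1 ->
  area s1 = area s + is_add o.
Proof.
case=> {o s1} [s0 p p' hpp hsp _ | s0 p _] /=.
- rewrite addn0 -!pre_area pre_add_on; apply/eqP; rewrite -(eqn_add2r (p < n)).
  by rewrite addnAC pre_sub_at // !ltn_ord.
- by rewrite -!pre_area pre_add_on ltn_ord.
Qed.

Lemma area_seq n (s s1 : {ffun 'I_n -> nat}) os : op_seq s os s1 ->
  area s1 = area s + count (@is_add n) os.
Proof.
elim=> [x|x o y os' z h _ IH] /=; first by rewrite addn0.
by rewrite IH (area_op h) addnA.
Qed.

Local Open Scope ring_scope.

Theorem theorem3p2 (m n : nat) : (1 <= n)%N ->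
  (* Psi maps sorted recurrent configurations to compatible pairs *)
  (forall c : config m n, sorted_config c -> stoch_recurrent c ->
     compatible_target m (Psi c)) /\
  (* injective on them *)
  (forall c1 c2 : config m n,
     sorted_config c1 -> stoch_recurrent c1 ->
     sorted_config c2 -> stoch_recurrent c2 ->
     Psi c1 = Psi c2 -> c1 = c2) /\
  (* surjective onto compatible pairs *)
  (forall P : {ffun 'I_n -> nat} * {ffun 'I_n -> nat},
     compatible_target m P ->
     exists c : config m n, [/\ sorted_config c, stoch_recurrent c & Psi c = P]) /\
  (* level formula and number of Add operations *)
  (forall c : config m n, sorted_config c -> stoch_recurrent c ->
     level c = (area c.2)%:Z - (area (kvec c))%:Z /\
     forall os, op_seq (kvec c) os c.2 -> level c = (count (@is_add n) os)%:Z).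
Proof.
move=> hn.
have htop : (n.-1 < n)%N by rewrite prednK.
have kvec_ferrers : forall c : config m n, ferrers (kvec c).
  move=> c j j' hjj; rewrite !ffunE; apply: subset_leq_card; apply/subsetP => i.
  by rewrite !inE => h; apply: leq_trans h _; rewrite ltnS.
have kvec_ncols : forall c : config m n, stable c -> ncols (kvec c) = m.
  move=> c [s1 _]; rewrite (ncols_top htop (kvec_ferrers c)) ffunE /=.
  rewrite prednK //.
  have -> : [set i | (c.1 i < n)%N] = setT by apply/setP => i; rewrite !inE s1.
  by rewrite cardsT card_ord.
have level_eq : forall c : config m n, stable c ->
    level c = (area c.2)%:Z - (area (kvec c))%:Z.
  move=> c [s1 _].
  have e := pre_kvec c (leqnn n).
  have eS : [set i | (c.1 i < n)%N] = setT by apply/setP => i; rewrite !inE s1.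
  rewrite eS pre_area cardsT card_ord in e.
  have e' : (area (kvec c) + \sum_(i < m) c.1 i)%N = (m * n)%N.
    by rewrite -e; congr (_ + _)%N; apply: eq_bigl => i; rewrite inE.
  rewrite /level; move: e'; rewrite /area.
  move: (\sum_(i < m) c.1 i)%N (\sum_(j < n) c.2 j)%N (\sum_(j < n) kvec c j)%N => x y z e'.
  lia.
split; [|split; [|split]].
- move=> c sc rc; have st := rc.1.
  split => //=.
  + exact: kvec_ncols.
  + exact: sc.2.
  + apply/bigmax_leqP => j _; rewrite -ltnS; exact: st.2.
  + apply: (ferrers_compat hn (kvec_ferrers c) sc.2) => t ht.
    exact: Inv_prefix ht (rec_Inv hn rc).
- move=> c1 c2 sc1 rc1 sc2 rc2 [ek e2].
  have e1 : c1.1 = c2.1.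
    apply/ffunP => i; apply/eqP; rewrite eqn_leq; apply/andP; split; rewrite leqNgt; apply/negP => h.
    + have h2 := rc2.1.1 i.
      have := kvec_le i (Ordinal h2) sc1.1; have := kvec_le i (Ordinal h2) sc2.1.
      by rewrite ek /= h ltnn => ->.
    + have h1 := rc1.1.1 i.
      have := kvec_le i (Ordinal h1) sc1.1; have := kvec_le i (Ordinal h1) sc2.1.
      by rewrite ek /= h ltnn => ->.
  by move: e1 e2; case: c1 {sc1 rc1 ek} => a b; case: c2 {sc2 rc2} => a' b' /= -> ->.
- move=> [F F'] [/= fF nF fF' nF' [os hos]].
  pose c : config m n := ([ffun i : 'I_m => #|[set j : 'I_n | (F j <= i)%N]|], F').
  have hFm : forall j, (F j <= m)%N by move=> j; rewrite -nF le_ncols.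
  have hFtop : F (Ordinal htop) = m by rewrite -(ncols_top htop fF).
  have ekF : kvec c = F.
    apply/ffunP => j; rewrite ffunE.
    have -> : [set i | (c.1 i < j.+1)%N] = [set i : 'I_m | (i < F j)%N].
      by apply/setP => i; rewrite !inE ffunE ltnS ffer_le.
    by rewrite card_lt.
  have sc : stable c.
    split => [i|j] /=.
      rewrite ffunE; apply: (@leq_trans (n.-1).+1); last by rewrite prednK.
      rewrite ltnS; have := ffer_le i (Ordinal htop) fF; rewrite /= => ->.
      by rewrite hFtop ltn_ord.
    rewrite ltnS; apply: leq_trans nF'; exact: le_ncols.
  exists c; split.
  + split => /= [i i' hii|//].
    rewrite !ffunE; apply: subset_leq_card; apply/subsetP => j; rewrite !inE => h.
    exact: leq_trans h hii.
  + apply: rec_of_TInv hn sc _.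
    have := TInv_init c; rewrite ekF => h.
    exact: TInv_seq hos h.
  + by rewrite /Psi ekF.
- move=> c sc rc; have st := rc.1.
  split; first exact: level_eq.
  move=> os hos; rewrite level_eq // (area_seq hos).
  move: (area (kvec c)) (count _ os) => x y; lia.
Qed.
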